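(* Let $X$ be a weakly connected digraph. Then for every $k\in\mathbb{N}$, $\lambda_1(H_k(X))\le\rho(H_k(X))\le3\lambda_1(H_k(X))$, where $\lambda_1(H_k(X))$ is the largest eigenvalue of $H_k(X)$.
   Context: A digraph $X$ has vertex set $\{v_1,\dots,v_n\}$ and a set of directed edges $\overrightarrow{e_{st}}$ (no loops); a pair with both $\overrightarrow{e_{st}}$ and $\overrightarrow{e_{ts}}$ is a digon. The underlying graph $\Gamma(X)$ is the simple graph with $v_s\sim v_t$ iff at least one of $\overrightarrow{e_{st}},\overrightarrow{e_{ts}}$ is in $X$; $X$ is weakly connected if $\Gamma(X)$ is connected. For $k\in\mathbb{N}$, the $k$-generalized Hermitian adjacency matrix $H_k(X)$ has $(s,t)$ entry $1$ if both $\overrightarrow{e_{st}},\overrightarrow{e_{ts}}\in E(X)$; $e^{i\pi/(k+1)}$ if $\overrightarrow{e_{st}}\in E(X)$ and $\overrightarrow{e_{ts}}\notin E(X)$; $e^{-i\pi/(k+1)}$ if $\overrightarrow{e_{st}}\notin E(X)$ and $\overrightarrow{e_{ts}}\in E(X)$; and $0$ otherwise. $\rho$ is the spectral radius. *)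

(* Defs.v *)
From HB Require Import structures.
From mathcomp Require Import all_boot all_order all_algebra.
From mathcomp Require Import reals trigo.
From mathcomp Require Import complex.
Set Implicit Arguments. Unset Strict Implicit. Unset Printing Implicit Defensive.
Import Order.TTheory GRing.Theory Num.Theory.
Local Open Scope ring_scope.
Import Num.Def.

(* A digraph on vertex set 'I_n is a relation E : rel 'I_n, where
   E s t means the arc e_st (from v_s to v_t) is present. *)
Definition loopless (n : nat) (E : rel 'I_n) : Prop := forall s, ~~ E s s.

Definition underlying (n : nat) (E : rel 'I_n) : rel 'I_n :=
  fun s t => (s != t) && (E s t || E t s).

Definition weakly_connected (n : nat) (E : rel 'I_n) : Prop :=
  forall s t : 'I_n, connect (underlying E) s t.

(* e^{i pi/(k+1)} = cos(pi/(k+1)) + i sin(pi/(k+1)) *)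
Definition omega_k (R : realType) (k : nat) : R[i] :=
  (cos (pi / (k.+1)%:R) +i* sin (pi / (k.+1)%:R))%C.

Definition Hk (R : realType) (k n : nat) (E : rel 'I_n) : 'M[R[i]]_n :=
  \matrix_(s, t)
    (if E s t && E t s then 1
     else if E s t then omega_k R k
     else if E t s then (omega_k R k)^*
     else 0).

Definition largest_eigenvalue (C : numClosedFieldType) (n : nat)
    (A : 'M[C]_n) (l : C) : Prop :=
  eigenvalue A l /\ (forall mu, eigenvalue A mu -> mu <= l).

Definition spectral_radius (C : numClosedFieldType) (n : nat)
    (A : 'M[C]_n) (r : C) : Prop :=
  (exists2 mu, eigenvalue A mu & `|mu| = r) /\
  (forall mu, eigenvalue A mu -> `|mu| <= r).

(* Main.v *)
Require Import Defs.
From HB Require Import structures.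
From mathcomp Require Import all_boot all_order all_algebra.
From mathcomp Require Import reals trigo.
From mathcomp Require Import complex.
From mathcomp Require Import spectral sesquilinear ring.
Import Order.TTheory GRing.Theory Num.Theory.
Local Open Scope ring_scope.

Section Aux.
Import Num.Def.
Local Open Scope sesquilinear_scope.
Set Implicit Arguments. Unset Strict Implicit.

Lemma omega_re (R : realType) k : (1 <= k)%N -> 0 <= omega_k R k + (omega_k R k)^*.
Proof.
move=> hk.
rewrite /omega_k lecE /=.
rewrite subrr eqxx /=.
have h : 0 <= cos (pi / (k.+1)%:R :> R).
  apply: cos_ge0_pihalf.
  have pi0 : 0 < pi :> R := pi_gt0 R.
  have hk0 : 0 < (k.+1)%:R :> R by rewrite ltr0n.
  apply/andP; split.
    apply: (@le_trans _ _ 0); first by rewrite oppr_le0 divr_ge0 // ltW.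
    by rewrite divr_ge0 // ltW.
  rewrite ler_pM2l // lef_pV2 ?posrE ?ltr0n // ler_nat ltnS //.
by apply: addr_ge0.
Qed.

Lemma rayleigh (C : numClosedFieldType) n (A : 'M[C]_n) (l : C) :
  A ^t* = A -> (forall mu, eigenvalue A mu -> mu <= l) ->
  forall y : 'rV_n, (y *m A *m y ^t*) 0 0 <= l * (y *m y ^t*) 0 0.
Proof.
move=> hA hl y.
have nA : A \is normalmx by apply/normalmxP; rewrite hA.
have /orthomx_spectralP eA := nA.
set P := spectralmx A in eA; set d := spectral_diag A in eA.
have Pu : P \is unitarymx := spectral_unitarymx A.
rewrite invmx_unitary // in eA.
set z := y *m P ^t*.
have e1 : y *m A *m y ^t* = z *m diag_mx d *m z ^t*.
  by rewrite /z {1}eA trmx_mul map_mxM trmxCK !mulmxA.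
have e2 : y *m y ^t* = z *m z ^t*.
  by rewrite /z trmx_mul map_mxM trmxCK mulmxA mulmxKtV.
rewrite e1 e2 !mxE big_distrr /=; apply: ler_sum => i _.
rewrite mul_mx_diag !mxE mulrAC [l * _]mulrC -[_ * d 0 i]mulrC -[_ * l]mulrC.
apply: ler_wpM2r; first by rewrite -normCK exprn_ge0.
apply: hl; apply/eigenvalueP; exists (row i P).
  rewrite -row_mul {1}eA !mulmxA (unitarymxP Pu) mul1mx.
  apply/rowP => j; rewrite !mxE (bigD1 i) //= !mxE eqxx mulr1n big1 ?addr0 //.
  by move=> k /negPf hk; rewrite !mxE eq_sym hk mulr0n mul0r.
apply/eqP => h.
have := congr1 (fun M => M *m P ^t*) h; rewrite rowE mulmxtVK // mul0mx.
move/matrixP => /(_ 0 i); rewrite !mxE !eqxx /= => /eqP; by rewrite oner_eq0.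
Qed.

Lemma QfE (C : numClosedFieldType) n (A : 'M[C]_n) (y : 'rV_n) :
  (y *m A *m y ^t*) 0 0 = \sum_s \sum_t y 0 s * A s t * conjC (y 0 t).
Proof.
rewrite !mxE exchange_big /=; apply: eq_bigr => t _.
by rewrite !mxE big_distrl.
Qed.

Lemma NfE (C : numClosedFieldType) n (y : 'rV[C]_n) :
  (y *m y ^t*) 0 0 = \sum_s `|y 0 s| ^+ 2.
Proof. by rewrite !mxE; apply: eq_bigr => s _; rewrite !mxE normCK. Qed.

Lemma cpos (C : numClosedFieldType) (w : C) : 0 <= w + conjC w + `|w| *+ 2.
Proof.
have [->|w0] := eqVneq w 0; first by rewrite normr0 mul0rn conjC0 !addr0.
have hw : 0 < `|w| by rewrite normr_gt0.
rewrite -(pmulr_rge0 _ hw).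
have -> : `|w| * (w + conjC w + `|w| *+ 2) = normr (w + `|w|) ^+ 2.
  rewrite normCK rmorphD /= (conj_Creal (normr_real w)).
  have hh : w * conjC w = `|w| ^+ 2 by rewrite normCK.
  have -> : (w + `|w|) * (conjC w + `|w|) = w * conjC w + `|w| * (w + conjC w) + `|w| * `|w| by ring.
  rewrite hh; ring.
by rewrite exprn_ge0.
Qed.

Definition cc (C : numClosedFieldType) (w : C) := w + conjC w + `|w| *+ 2.

Lemma cc_conj (C : numClosedFieldType) (w : C) : cc (conjC w) = cc w.
Proof. rewrite /cc conjCK norm_conjC; ring. Qed.

Lemma term_id (C : numClosedFieldType) (a b h : C) :
  a * h * conjC b + conjC a * h * conjC (conjC b) + `|a| * h * conjC `|b| *+ 2
  = h * cc (a * conjC b).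
Proof.
have e : conjC (a * conjC b) = conjC a * b.
  by rewrite rmorphM; congr (_ * _); exact: conjCK.
have e2 : conjC (conjC b) = b := conjCK b.
rewrite /cc e e2 normrM norm_conjC (conj_Creal (normr_real b)); ring.
Qed.

Lemma cc_swap (C : numClosedFieldType) (a b : C) : cc (a * conjC b) = cc (b * conjC a).
Proof.
rewrite -cc_conj.
have e : conjC (a * conjC b) = conjC a * b.
  by rewrite rmorphM; congr (_ * _); exact: conjCK.
by rewrite e mulrC.
Qed.

Lemma key (C : numClosedFieldType) n (A : 'M[C]_n) (l mu : C) :
  A ^t* = A -> (forall i j, 0 <= A i j + conjC (A i j)) ->
  (forall mu, eigenvalue A mu -> mu <= l) -> eigenvalue A mu ->
  0 <= mu + 3%:R * l.
Proof.
move=> hA hpos hl /eigenvalueP [x hx x0].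
have hsym : forall i j, A j i = conjC (A i j) by move=> i j; rewrite -{1}hA !mxE.
pose xc := map_mx conjC x; pose xa := map_mx normr x.
pose N := (x *m x ^t*) 0 0.
have Npos : 0 < N.
  have [s hs] : exists s, x 0 s != 0.
    apply/existsP; apply: contraR x0 => /existsPn h; apply/eqP/rowP => j.
    by rewrite !mxE; apply/eqP; move: (h j); rewrite negbK.
  rewrite /N NfE (bigD1 s) //=.
  have h1 : 0 < `|x 0 s| ^+ 2 by rewrite exprn_gt0 // normr_gt0.
  have h2 : 0 <= \sum_(j | j != s) `|x 0 j| ^+ 2 by apply: sumr_ge0 => j _; exact: exprn_ge0.
  by apply: (lt_le_trans h1); rewrite lerDl.
have Qx : (x *m A *m x ^t*) 0 0 = mu * N.
  by rewrite hx -scalemxAl mxE.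
have Nc : (xc *m xc ^t*) 0 0 = N.
  by rewrite /N !NfE; apply: eq_bigr => s _; rewrite !mxE norm_conjC.
have Na : (xa *m xa ^t*) 0 0 = N.
  by rewrite /N !NfE; apply: eq_bigr => s _; rewrite !mxE normr_id.
have Qc := rayleigh hA hl xc; rewrite Nc in Qc.
have Qa := rayleigh hA hl xa; rewrite Na in Qa.
pose S := \sum_s \sum_t A s t * cc (x 0 s * conjC (x 0 t)).
have eS : (x *m A *m x ^t*) 0 0 + (xc *m A *m xc ^t*) 0 0 + (xa *m A *m xa ^t*) 0 0 *+ 2 = S.
  rewrite !QfE -sumrMnl -!big_split /=; apply: eq_bigr => s _.
  rewrite -sumrMnl -!big_split /=; apply: eq_bigr => t _.
  rewrite !mxE; exact: term_id.
have S2 : S *+ 2 = \sum_s \sum_t (A s t + conjC (A s t)) * cc (x 0 s * conjC (x 0 t)).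
  have eT : \sum_s \sum_t conjC (A s t) * cc (x 0 s * conjC (x 0 t)) = S.
    rewrite /S exchange_big /=; apply: eq_bigr => t _; apply: eq_bigr => s _.
    by rewrite -hsym cc_swap.
  by rewrite mulr2n -{2}eT -big_split /=; apply: eq_bigr => s _; rewrite -big_split /=;
     apply: eq_bigr => t _; rewrite mulrDl.
have S0 : 0 <= S.
  have : 0 <= S *+ 2.
    by rewrite S2; apply: sumr_ge0 => s _; apply: sumr_ge0 => t _; apply: mulr_ge0 => //; exact: cpos.
  by rewrite pmulrn_lge0.
have : 0 <= (mu + 3%:R * l) * N.
  apply: (le_trans S0); rewrite -eS Qx.
  have -> : (mu + 3%:R * l) * N = mu * N + l * N + (l * N) *+ 2 by ring.
  by apply: lerD; [apply: lerD | rewrite !mulr2n; apply: lerD].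
by rewrite pmulr_lge0.
Qed.

Lemma Hk_herm (R : realType) k n (E : rel 'I_n) : (Hk R k E) ^t* = Hk R k E.
Proof.
apply/matrixP => i j; rewrite !mxE.
have e2 : conjC (conjC (omega_k R k)) = omega_k R k := conjCK _.
by case: (E i j); case: (E j i) => /=; rewrite ?rmorph1 ?rmorph0 ?e2.
Qed.

Lemma Hk_pos (R : realType) k n (E : rel 'I_n) : (1 <= k)%N ->
  forall i j, 0 <= Hk R k E i j + conjC (Hk R k E i j).
Proof.
move=> hk i j; rewrite !mxE.
have e2 : conjC (conjC (omega_k R k)) = omega_k R k := conjCK _.
have h := omega_re R hk.
case: (E i j); case: (E j i) => /=; rewrite ?rmorph1 ?rmorph0 ?e2 ?addr0 //.
- by rewrite addr_ge0.
- by rewrite addrC.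
Qed.

End Aux.

Theorem theorem5p4 (R : realType) (n : nat) (E : rel 'I_n)
  (Hloop : loopless E) (Hconn : weakly_connected E) (k : nat) (hk : (1 <= k)%N)
  (l r : R[i]) :
  largest_eigenvalue (Hk R k E) l -> spectral_radius (Hk R k E) r ->
  l <= r <= 3 * l.
Proof.
move=> [hlE hl] [[mu0 hmu0 <-] hr].
have K := fun mu => key (@Hk_herm R k n E) (@Hk_pos R k n E hk) hl (mu:=mu).
have l0 : 0 <= l.
  have := K l hlE.
  rewrite (_ : l + 3%:R * l = l *+ 4); last by ring.
  by rewrite pmulrn_lge0.
have lreal : l \is Num.real := ger0_real l0.
have mu0real : mu0 \is Num.real.
  have h : 0 <= l - mu0 by rewrite subr_ge0; exact: hl.
  by rewrite -[mu0](subKr l) rpredB // ger0_real.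
apply/andP; split.
  exact: le_trans (real_ler_norm lreal) (hr l hlE).
rewrite (real_ler_norml _ mu0real); apply/andP; split.
  by rewrite -subr_ge0 opprK; exact: K.
apply: le_trans (hl mu0 hmu0) _.
rewrite -subr_ge0 (_ : 3%:R * l - l = l *+ 2); first by rewrite mulrn_wge0.
by ring.
Qed.
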